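(* Let $(a,b,c)$ be a standard Pythagorean triple. Then there exist polynomials $\mathcal{A}(q),\mathcal{B}(q),\mathcal{C}(q)\in\mathbb{Z}[q]$ such that: (0) they satisfy the $q$-deformed Pythagoras equation $$\mathcal{A}(q)^2+q\,\mathcal{B}(q)^2=\mathcal{C}(q)\,\mathcal{C}^*(q),\qquad\text{where } \mathcal{C}^*(q):=q^{\deg(\mathcal{C})}\,\mathcal{C}(q^{-1});$$ (1) $\mathcal{A},\mathcal{B},\mathcal{C}$ have positive integer coefficients; (2) $\mathcal{A}$ and $\mathcal{B}$ are self-reciprocal (palindromic), i.e. $q^{\deg P}P(q^{-1})=P(q)$ for $P\in\{\mathcal{A},\mathcal{B}\}$; (3) $\mathcal{A},\mathcal{B},\mathcal{C}$ and $\mathcal{C}^*$ are monic, i.e. their leading coefficient and their lowest-degree coefficient are both equal to $1$; and moreover $(\mathcal{A}(1),\mathcal{B}(1),\mathcal{C}(1))=(a,b,c)$.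
   Context: A Pythagorean triple is a triple $(a,b,c)$ of positive integers with $a^2+b^2=c^2$. It is called standard if either $\gcd(a,b,c)=1$ and $a$ is even, or $\gcd(a,b,c)=2$ and $a/2$ is odd. (The order matters: $a$ and $b$ are not interchangeable.) *)

(* Defs.v *)
From mathcomp Require Import all_boot all_order all_algebra.
Set Implicit Arguments. Unset Strict Implicit. Unset Printing Implicit Defensive.
Import Order.TTheory GRing.Theory Num.Theory.
Local Open Scope ring_scope.

Definition standard_triple (a b c : nat) : Prop :=
  [/\ (0 < a)%N, (0 < b)%N, (0 < c)%N, (a ^ 2 + b ^ 2 = c ^ 2)%N &
      ((gcdn (gcdn a b) c = 1%N /\ ~~ odd a) \/
       (gcdn (gcdn a b) c = 2%N /\ odd (a %/ 2)%N))].

(* P^*(q) := q^{deg P} P(q^{-1}), with deg P = (size P).-1: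
   the coefficient of q^i in P^* is the coefficient of q^{deg P - i} in P. *)
Definition recip (P : {poly int}) : {poly int} :=
  \poly_(i < size P) P`_((size P).-1 - i).

Definition pos_coefs (P : {poly int}) : Prop :=
  forall i : nat, (i < size P)%N -> 0 < P`_i.

Definition monic2 (P : {poly int}) : Prop :=
  lead_coef P = 1 /\ P`_0 = 1.

(* Main.v *)
Require Import Defs.
From mathcomp Require Import all_boot all_order all_algebra.
From mathcomp Require Import zify ring.
Import Order.TTheory GRing.Theory Num.Theory.
Local Open Scope ring_scope.

Definition revd (d : nat) (P : {poly int}) : {poly int} :=
  \poly_(i < d.+1) P`_(d - i).

Lemma revdD d P Q : revd d (P + Q) = revd d P + revd d Q.
Proof.
apply/polyP => k; rewrite coefD !coef_poly; case: ifP => _; rewrite ?coefD ?addr0 //.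
Qed.

Lemma revd0 d : revd d 0 = 0.
Proof. by apply/polyP => k; rewrite coef_poly !coef0 if_same. Qed.

Lemma revdZ d c P : revd d (c *: P) = c *: revd d P.
Proof.
apply/polyP => k; rewrite coefZ !coef_poly; case: ifP => _; rewrite ?coefZ ?mulr0 //.
Qed.

Lemma revd_sum d (I : Type) (r : seq I) (F : I -> {poly int}) :
  revd d (\sum_(i <- r) F i) = \sum_(i <- r) revd d (F i).
Proof. exact: (big_morph _ (revdD d) (revd0 d)). Qed.

Lemma revdX d i : (i <= d)%N -> revd d 'X^i = 'X^(d - i).
Proof.
move=> hi; apply/polyP => k; rewrite coef_poly !coefXn.
case: ltnP => hk.
  by congr (_%:R); apply/eqP/eqP; lia.
by case: eqP => //; lia.
Qed.

Lemma poly_expand n (P : {poly int}) : (size P <= n)%N ->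
  P = \sum_(i < n) P`_i *: 'X^i.
Proof.
move=> hs; rewrite -poly_def; apply/polyP => k; rewrite coef_poly.
case: ltnP => // hk; rewrite nth_default //; exact: leq_trans hk.
Qed.

Lemma revdM d1 d2 (P Q : {poly int}) : (size P <= d1.+1)%N -> (size Q <= d2.+1)%N ->
  revd (d1 + d2) (P * Q) = revd d1 P * revd d2 Q.
Proof.
move=> hP hQ.
rewrite {1 2}(@poly_expand _ _ hP) {1 2}(@poly_expand _ _ hQ).
rewrite !mulr_suml revd_sum !revd_sum.
rewrite mulr_suml; apply: eq_bigr => i _.
rewrite !mulr_sumr !revd_sum; apply: eq_bigr => k _.
have hi := ltn_ord i; have hk := ltn_ord k.
rewrite -scalerAl -scalerAr !revdZ -exprD !revdX; try lia.
rewrite -scalerAl -scalerAr -exprD; congr (_ *: (_ *: 'X^_)); lia.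
Qed.

Lemma recipE P : P != 0 -> recip P = revd (size P).-1 P.
Proof. by move=> hP; rewrite /recip /revd prednK // lt0n size_poly_eq0. Qed.

Definition qn (k : nat) : {poly int} := \poly_(i < k) 1.

Lemma coef_qn k i : (qn k)`_i = (i < k)%:R.
Proof. by rewrite coef_poly; case: ifP. Qed.

Lemma size_qn k : size (qn k) = k.
Proof. by rewrite size_poly_eq // oner_neq0. Qed.

Lemma qn_neq0 k : (0 < k)%N -> qn k != 0.
Proof. by move=> hk; rewrite -size_poly_eq0 size_qn -lt0n. Qed.

Lemma pos_qn k : pos_coefs (qn k).
Proof. by move=> i; rewrite size_qn coef_qn => ->. Qed.

Lemma monic2_qn k : (0 < k)%N -> monic2 (qn k).
Proof.
move=> hk; split; first by rewrite lead_coefE size_qn coef_qn ltn_predL hk.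
by rewrite coef_qn hk.
Qed.

Lemma revd_qn k : (0 < k)%N -> revd k.-1 (qn k) = qn k.
Proof.
move=> hk; apply/polyP => i; rewrite coef_poly !coef_qn prednK //.
case: (ltnP i k) => h; last by [].
by have -> : (k.-1 - i < k)%N by lia.
Qed.

Lemma qn_split a b : qn (a + b) = qn a + 'X^a * qn b.
Proof.
apply/polyP => i; rewrite coefD coefXnM !coef_qn.
case: (ltnP i a) => h.
  by rewrite addr0; have -> : (i < a + b)%N by lia.
by rewrite add0r; have -> : (i < a + b)%N = (i - a < b)%N by apply/idP/idP; lia.
Qed.

Lemma qn_horner k : (qn k).[1] = k%:R.
Proof.
rewrite horner_poly; under eq_bigr do rewrite expr1n mulr1.
by rewrite sumr_const card_ord.
Qed.

Lemma coef_ge0 P : pos_coefs P -> forall i, 0 <= P`_i.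
Proof.
move=> hP i; case: (ltnP i (size P)) => h; first exact: ltW (hP _ h).
by rewrite nth_default.
Qed.

Lemma posM P Q : pos_coefs P -> pos_coefs Q -> P != 0 -> Q != 0 ->
  pos_coefs (P * Q).
Proof.
move=> hP hQ nP nQ i; rewrite size_mul // => hi.
have sP : (0 < size P)%N by rewrite lt0n size_poly_eq0.
have sQ : (0 < size Q)%N by rewrite lt0n size_poly_eq0.
pose k0 := minn i (size P).-1.
have hk0 : (k0 < i.+1)%N by rewrite /k0; lia.
rewrite coefM (bigD1 (Ordinal hk0)) //=.
apply: ltr_wpDr; first by apply: sumr_ge0 => j _; apply: mulr_ge0; apply: coef_ge0.
apply: mulr_gt0; [apply: hP | apply: hQ]; rewrite /k0; clear -hi sP sQ; move: hi sP sQ; set sp := size P; set sq := size Q; lia.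
Qed.

Lemma posDX P Q k : pos_coefs P -> pos_coefs Q -> Q != 0 ->
  (k <= size P)%N -> (size P < k + size Q)%N -> pos_coefs (P + 'X^k * Q).
Proof.
move=> hP hQ nQ h1 h2.
have sX : size ('X^k * Q) = (k + size Q)%N by rewrite mulrC size_mulXn.
move=> i; rewrite [P + _]addrC size_polyDl ?sX // => hi.
rewrite coefD coefXnM; case: ifP => h.
  by rewrite add0r; apply: hP; lia.
apply: ltr_wpDr; first exact: coef_ge0.
apply: hQ; lia.
Qed.

Lemma monic2M P Q : monic2 P -> monic2 Q -> monic2 (P * Q).
Proof.
by case=> h1 h2 [h3 h4]; split; rewrite ?lead_coefM ?coef0M ?h1 ?h2 ?h3 ?h4 ?mulr1.
Qed.

Ltac nlia := match goal with [ h0 : is_true (0 < ?n)%N, h1 : is_true (0 < ?j)%N |- _ ] => clear - h0 h1; lia end.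

Lemma construct n j : (0 < n)%N -> (0 < j)%N ->
  exists A B C : {poly int},
    [/\ A ^+ 2 + 'X * B ^+ 2 = C * recip C,
        [/\ pos_coefs A, pos_coefs B & pos_coefs C],
        recip A = A /\ recip B = B,
        [/\ monic2 A, monic2 B, monic2 C & monic2 (recip C)] &
        [/\ A.[1] = (2 * ((j + n) * n))%N%:Z, B.[1] = (j * (j + n + n))%N%:Z
          & C.[1] = (n * n + (j + n) * (j + n))%N%:Z]].
Proof.
move=> n0 j0.
set S := qn n; set R := qn (j + n); set T := qn j; set U := qn (j + n + n).
set E : {poly int} := 'X^(j.+1) + 1.
have sS : size S = n by rewrite size_qn.
have sR : size R = (j + n)%N by rewrite size_qn.
have sT : size T = j by rewrite size_qn.
have sU : size U = (j + n + n)%N by rewrite size_qn.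
have sE : size E = j.+2 by rewrite /E -polyC1 size_XnaddC.
have nS : S != 0 by rewrite qn_neq0.
have nR : R != 0 by rewrite qn_neq0 // addn_gt0 n0 orbT.
have nT : T != 0 by rewrite qn_neq0.
have nU : U != 0 by rewrite qn_neq0 // addn_gt0 n0 orbT.
have nE : E != 0 by rewrite -size_poly_eq0 sE.
have hR1 : R = T + 'X^j * S by rewrite /R qn_split.
have hR2 : R = S + 'X^n * T by rewrite /R addnC qn_split.
have hU : U = R + 'X^j * 'X^n * S by rewrite /U qn_split -exprD.
have hB : T * U = R * R - 'X^j * (S * S).
  have e1 : R - T - 'X^j * S = 0 by rewrite {1}hR1; ring.
  have e2 : R - S - 'X^n * T = 0 by rewrite {1}hR2; ring.
  apply/eqP; rewrite -subr_eq0; apply/eqP.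
  have -> : T * U - (R * R - 'X^j * (S * S)) =
     - ((R - T - 'X^j * S) * R + 'X^j * S * (R - S - 'X^n * T)) by rewrite hU; ring.
  by rewrite e1 e2; ring.
set A := S * (R * E); set B := T * U; set C := S * S + 'X^1 * (R * R).
have sSS : size (S * S) = (n + n).-1 by rewrite size_mul // sS.
have sRR : size (R * R) = ((j + n) + (j + n)).-1 by rewrite size_mul // sR.
have sXRR : size ('X^1 * (R * R)) = (j + n + (j + n))%N.
  rewrite mulrC size_mulXn ?mulf_neq0 // sRR; nlia.
have sC : size C = (j + n + (j + n))%N.
  by rewrite /C addrC size_polyDl sXRR // sSS; nlia.
have nC : C != 0 by rewrite -size_poly_eq0 sC; nlia.
have rC : recip C = R * R + 'X^((j + j).+1) * (S * S).
  rewrite recipE // sC /C revdD addrC.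
  congr (_ + _).
    rewrite (_ : (j + n + (j + n)).-1 = (1 + ((j + n).-1 + (j + n).-1))%N); last nlia.
    rewrite revdM; last 2 first.
    - by rewrite size_polyXn.
    - by rewrite sRR; nlia.
    rewrite revdX // subnn expr0 mul1r revdM ?sR ?prednK // ?revd_qn //; nlia.
  rewrite -{1}[S * S]mulr1.
  rewrite (_ : (j + n + (j + n)).-1 = ((n.-1 + n.-1) + (j + j).+1)%N); last nlia.
  rewrite revdM; last 2 first.
  - by rewrite sSS; nlia.
  - by rewrite size_poly1.
  rewrite revdM ?sS ?prednK // revd_qn // -(expr0 'X) revdX // subn0.
  by rewrite mulrC.
have sRE : size (R * E) = (j + n + j.+1)%N by rewrite size_mul // sR sE; nlia.
have nRE : R * E != 0 by rewrite mulf_neq0.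
have nA : A != 0 by rewrite mulf_neq0.
have nB : B != 0 by rewrite mulf_neq0.
have sA : size A = (n + (j + n + j.+1)).-1 by rewrite size_mul // sS sRE.
have sB : size B = (j + (j + n + n)).-1 by rewrite size_mul // sT sU.
have rE : revd j.+1 E = E.
  by rewrite /E revdD -(expr0 'X) !revdX // subnn subn0 addrC.
have mE : monic2 E.
  split; first by rewrite /E -polyC1 lead_coefXnaddC.
  by rewrite /E coefD coefXn coef1.
have mS : monic2 S by apply: monic2_qn.
have mR : monic2 R by apply: monic2_qn; nlia.
have mT : monic2 T by apply: monic2_qn.
have mU : monic2 U by apply: monic2_qn; nlia.
exists A, B, C; split.
- rewrite rC /A /B hB /C /E !exprS exprD expr0; ring.
- split.
  + have pRE : pos_coefs (R * E).
      rewrite (_ : R * E = R + 'X^(j.+1) * R); last first.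
        by rewrite /E mulrDr mulr1 addrC [R * _]mulrC.
      apply: posDX; try exact: pos_qn; rewrite ?sR //; nlia.
    exact: posM (pos_qn _) pRE nS nRE.
  + by apply: posM; try exact: pos_qn.
  + apply: posDX; rewrite ?sSS ?sRR; try nlia.
    * by apply: posM; try exact: pos_qn.
    * by apply: posM; try exact: pos_qn.
    * by rewrite mulf_neq0.
- split.
  + rewrite recipE // sA.
    rewrite (_ : (n + (j + n + j.+1)).-1.-1 = (n.-1 + ((j + n).-1 + j.+1))%N); last nlia.
    rewrite revdM ?sS ?prednK // ?revd_qn //; last by rewrite sRE; nlia.
    by rewrite revdM ?sR ?prednK ?rE ?revd_qn ?sE //; nlia.
  + rewrite recipE // sB.
    rewrite (_ : (j + (j + n + n)).-1.-1 = (j.-1 + (j + n + n).-1)%N); last nlia.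
    by rewrite revdM ?sT ?sU ?prednK ?revd_qn //; nlia.
- split.
  + by apply: monic2M => //; apply: monic2M.
  + by apply: monic2M.
  + split.
    * rewrite /C lead_coefDr; last by rewrite sXRR sSS; nlia.
      by rewrite lead_coefM lead_coefXn !lead_coefM mR.1 mulr1.
    * rewrite /C coefD coefXnM /= coef0M mS.2 mulr1 addr0 //.
  + rewrite rC; split.
    * rewrite lead_coefDr; last first.
        by rewrite ['X^_ * _]mulrC size_mulXn ?mulf_neq0 // sSS sRR; nlia.
      by rewrite lead_coefM lead_coefXn !lead_coefM mS.1 !mulr1.
    * by rewrite coefD coefXnM /= coef0M mR.2 mulr1 addr0.
- split.
  + have E1 : E.[1] = 2%:R by rewrite /E hornerD hornerXn expr1n -polyC1 hornerC.
    rewrite /A !hornerM E1 !qn_horner; nlia.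
  + rewrite /B !hornerM !qn_horner; nlia.
  + rewrite /C hornerD !hornerM hornerXn expr1n mul1r !qn_horner; nlia.
Qed.

Local Open Scope nat_scope.
Lemma sq_coprime x y k : coprime x y -> x * y = k * k -> x = gcdn x k * gcdn x k.
Proof.
move=> cxy hxy; set g := gcdn x k.
apply/eqP; rewrite eqn_dvd; apply/andP; split.
  rewrite {2}/g muln_gcdr dvdn_gcd; apply/andP; split; first by rewrite dvdn_mull.
  rewrite /g muln_gcdl dvdn_gcd; apply/andP; split; first by rewrite dvdn_mulr.
  by rewrite -hxy dvdn_mulr.
have cgy : coprime (g * g) y.
  by rewrite coprimeMl; apply/andP; split; apply: coprime_dvdl (dvdn_gcdl _ _) cxy.
rewrite -(Gauss_dvdl _ cgy) hxy.
by apply: dvdn_mul; apply: dvdn_gcdr.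
Qed.


Lemma fin_arith a b c k y m n : a = 2 * k -> c = b + 2 * y -> b + y = m * m ->
  k = m * n -> y = n * n -> 0 < b -> 0 < y ->
  exists n j, [/\ 0 < n, 0 < j, a = 2 * ((j + n) * n), b = j * (j + n + n)
    & c = n * n + (j + n) * (j + n)].
Proof.
move=> -> -> hx -> hy b0 y0; subst y.
have n0 : 0 < n by rewrite lt0n; apply/eqP => e; move: y0; rewrite e.
have hmn : n < m by rewrite -ltn_sqr !expnS !expn0 !muln1 -hx; lia.
have [j hj] : exists j, m = j + n by exists (m - n); rewrite subnK // ltnW.
subst m.
have j0 : 0 < j by lia.
exists n, j; split => //.
- have : b + n * n = j * (j + n + n) + n * n by rewrite hx; ring.
  by move/addIn.
- by rewrite (_ : b = j * (j + n + n)); [ring | apply/(@addIn (n * n)); rewrite hx; ring].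
Qed.

Lemma param a b c : standard_triple a b c ->
  exists n j, [/\ 0 < n, 0 < j, a = 2 * ((j + n) * n), b = j * (j + n + n)
    & c = n * n + (j + n) * (j + n)].
Proof.
case=> a0 b0 c0 hP hg.
have ea : 2 %| a.
  case: hg => [[_ ha] | [h _]]; first by rewrite dvdn2.
  by rewrite -h; apply: dvdn_trans (dvdn_gcdl _ _) (dvdn_gcdl _ _).
set k := a %/ 2.
have hk : a = 2 * k by rewrite /k mulnC divnK.
have hbc : b < c.
  rewrite -(ltn_sqr b c) -hP; nia.
have hodd : odd c = odd b.
  have oa : odd a = false by apply/negbTE; rewrite -dvdn2.
  by have := congr1 odd hP; rewrite oddD !oddX /= oa.
have hev : 2 %| c - b by rewrite dvdn2 oddB ?(ltnW hbc) // hodd addbb.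
set y := (c - b) %/ 2.
have hy : c = b + 2 * y by rewrite /y mulnC divnK //; lia.
set x := b + y.
have hxy : x * y = k * k.
  move: hP; rewrite hy hk /x; nia.
have cxy : coprime x y.
  set g := gcdn x y.
  have gx : g %| x := dvdn_gcdl _ _.
  have gy : g %| y := dvdn_gcdr _ _.
  have gb : g %| b by rewrite (_ : b = x - y); [exact: dvdn_sub | rewrite /x; lia].
  have gc : g %| c by rewrite hy (_ : b + 2 * y = x + y); [exact: dvdn_add | rewrite /x; lia].
  have gk : g %| k.
    rewrite -(@dvdn_pexp2r _ _ 2) // !expnS !expn0 !muln1 -hxy.
    exact: dvdn_mul.
  have ga : g %| a by rewrite hk dvdn_mull.
  have gG : g %| gcdn (gcdn a b) c by rewrite !dvdn_gcd ga gb gc.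
  case: hg => [[h _] | [h hko]].
    by rewrite /coprime -/g -dvdn1 -h.
  rewrite h in gG.
  have g2 : g <= 2 by apply: dvdn_leq.
  have g0 : 0 < g.
    by move: gG; case: (g) => //.
  rewrite /coprime -/g; apply/eqP.
  have : g != 2.
    apply/eqP => e; move: gk; rewrite e dvdn2 -/k hko //.
  lia.
set m := gcdn x k; set n := gcdn y k.
have hx : x = m * m by exact: sq_coprime cxy hxy.
have hy2 : y = n * n.
  by apply: (@sq_coprime y x k); [rewrite coprime_sym | rewrite mulnC].
have hmn : k = m * n.
  apply/eqP; rewrite -eqn_sqr !expnS !expn0 !muln1 -hxy hx hy2; apply/eqP; nia.
have y0 : 0 < y by move: hbc; rewrite hy; clear; lia.
exact: (fin_arith _ _ _ _ _ _ _ hk hy hx hmn hy2 b0 y0).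
Qed.

Local Open Scope ring_scope.

Theorem theorem1 (a b c : nat) :
  standard_triple a b c ->
  exists A B C : {poly int},
    [/\ A ^+ 2 + 'X * B ^+ 2 = C * recip C,
        [/\ pos_coefs A, pos_coefs B & pos_coefs C],
        recip A = A /\ recip B = B,
        [/\ monic2 A, monic2 B, monic2 C & monic2 (recip C)] &
        [/\ A.[1] = a%:Z, B.[1] = b%:Z & C.[1] = c%:Z]].
Proof.
move=> h; have [n [j [n0 j0 ha hb hc]]] := param a b c h.
have [A [B [C [h0 h1 h2 h3 [v1 v2 v3]]]]] := construct n j n0 j0.
by exists A, B, C; split => //; rewrite ha hb hc.
Qed.
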